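(* Let $n$ be a positive integer. Call a function $C:[n]^3\to\mathbb{Z}_{\ge 0}$ an SBC$(n)$ if its $3n^2$ line sums (the sums $\sum_{i} C(i,j,k)$ for fixed $(j,k)$, $\sum_{j} C(i,j,k)$ for fixed $(i,k)$, and $\sum_{k} C(i,j,k)$ for fixed $(i,j)$) are exactly the integers $0,1,\dots,3n^2-1$, each occurring once. If there exists an SBC$(n)$, then there exists an SBC$(mn)$ for every positive integer $m$.
   Context: $[n]=\{1,2,\dots,n\}$; indices in the line sums range over $[n]$. *)

(* Defs.v *)
From mathcomp Require Import all_boot.
Set Implicit Arguments. Unset Strict Implicit. Unset Printing Implicit Defensive.

(* A cube C : [n]^3 -> Z_{>=0}, with indices 0..n-1 (ordinals) standing for 1..n. *)
Definition cube (n : nat) := 'I_n -> 'I_n -> 'I_n -> nat.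

Definition line_sums (n : nat) (C : cube n) : seq nat :=
  [seq \sum_(i < n) C i jk.1 jk.2 | jk : 'I_n * 'I_n] ++
  [seq \sum_(j < n) C ik.1 j ik.2 | ik : 'I_n * 'I_n] ++
  [seq \sum_(k < n) C ij.1 ij.2 k | ij : 'I_n * 'I_n].

Definition SBC (n : nat) (C : cube n) : Prop :=
  perm_eq (line_sums C) (iota 0 (3 * n ^ 2)).

(* Main.v *)
Require Import Defs.
From mathcomp Require Import all_boot.
Set Implicit Arguments. Unset Strict Implicit. Unset Printing Implicit Defensive.

Lemma iota_pairs K M : [seq M * x + t | x <- iota 0 K, t <- iota 0 M] = iota 0 (K*M).
Proof.
elim: K => [|K IH]; first by rewrite mul0n.
rewrite -addn1 iotaD allpairs_cat IH /= cats0 add0n mulnDl mul1n iotaD add0n.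
by rewrite -(addn0 (K * M)) iotaDl mulnC.
Qed.

Lemma permL (T Q : finType) K (F : Q -> nat) (pi : T -> Q) (tau : T -> nat) :
  (forall p, tau p < K) -> injective (fun p => (pi p, tau p)) -> #|Q| * K <= #|T| ->
  perm_eq [seq K * F (pi p) + tau p | p : T]
          [seq K * x + t | x <- [seq F q | q : Q], t <- iota 0 K].
Proof.
move=> ltK inj cardT.
pose h (p : T) : (Q * 'I_K)%type := (pi p, Ordinal (ltK p)).
have hinj : injective h.
  by move=> p1 p2 [e1 e2]; apply: inj => /=; rewrite e1 e2.
have hbij := inj_card_onto hinj.
rewrite allpairs_mapl -val_enum_ord allpairs_mapr.
rewrite -(map_allpairs (fun qt : Q * 'I_K => K * F qt.1 + qt.2) (fun x y => (x, y))).
have -> : [seq K * F (pi p) + tau p | p : T] =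
   map (fun qt : Q * 'I_K => K * F qt.1 + qt.2) (map h (enum T)).
  by rewrite -map_comp.
apply: perm_map; apply: uniq_perm.
- by rewrite map_inj_uniq // enum_uniq.
- apply: allpairs_uniq; rewrite ?enum_uniq //.
  by move=> [a b] [c d] _ _ /= [-> ->].
- move=> [q t]; rewrite (allpairs_f (fun x y => (x,y))) ?mem_enum //.
  have := hbij _ (q, t); rewrite card_prod card_ord => /(_ cardT).
  by rewrite codomE.
Qed.

From mathcomp Require Import zify.

Lemma sum_divmod n m (F : nat -> nat -> nat) : 0 < n ->
  \sum_(x < m * n) F (x %/ n) (x %% n) = \sum_(a < m) \sum_(i < n) F a i.
Proof.
move=> hn; elim: m => [|m IH]; first by rewrite mul0n !big_ord0.
rewrite mulSnr big_split_ord IH big_ord_recr /=; congr (_ + _).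
apply: eq_bigr => i _ /=.
by rewrite divnMDl // modnMDl divn_small // modn_small // addn0.
Qed.

Lemma line_sum m n (P Q : nat -> bool) a0 i0 (G V : nat -> nat) W :
  a0 < m -> i0 < n -> (forall a, a < m -> P a = (a == a0)) ->
  (forall i, i < n -> Q i = (i == i0)) ->
  \sum_(a < m) \sum_(i < n) (if P a then W * G i + (if Q i then V a else 0) else 0)
  = W * \sum_(i < n) G i + V a0.
Proof.
move=> ha hi HP HQ.
rewrite (bigD1 (Ordinal ha)) //= [X in _ + X]big1 ?addn0; last first.
  move=> a /eqP ne; rewrite HP //; case: eqP => [e|_]; last by rewrite big1.
  by exfalso; apply: ne; apply: val_inj; rewrite /= e.
rewrite HP // eqxx big_split /= -big_distrr /=; congr (_ + _).
rewrite (bigD1 (Ordinal hi)) //= [X in _ + X]big1 ?addn0 ?HQ ?eqxx //.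
move=> i /eqP ne; rewrite HQ //; case: eqP => [e|_] //.
by exfalso; apply: ne; apply: val_inj; rewrite /= e.
Qed.

Definition ustar M s := (M - s %% M) %% M.

Lemma ustar_lt M s : 0 < M -> ustar M s < M.
Proof. by move=> hM; rewrite ltn_pmod. Qed.

Lemma ustarP M s x : 0 < M -> x < M -> ((x + s) %% M == 0) = (x == ustar M s).
Proof.
move=> hM hx.
have H : (ustar M s + s) %% M = 0.
  rewrite /ustar modnDml -modnDmr subnK ?modnn //.
  exact: ltnW (ltn_pmod _ hM).
rewrite -{1}H eqn_modDr !modn_small // ustar_lt //.
Qed.

Lemma pair_eq m b1 c1 b2 c2 : c1 < m -> c2 < m -> m * b1 + c1 = m * b2 + c2 ->
  b1 = b2 /\ c1 = c2.
Proof.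
move=> h1 h2 e.
have hm : 0 < m by case: m h1 {h2 e}.
have := congr1 (divn^~ m) e; have := congr1 (modn^~ m) e.
rewrite ![m * _]mulnC !modnMDl !divnMDl // !modn_small // !divn_small // !addn0.
by move=> -> ->.
Qed.

Lemma ordv n (a b : 'I_n) : a = b -> (a : nat) = b.
Proof. by move->. Qed.

Lemma ord_eq N n (y1 y2 : 'I_N) : y1 %/ n = y2 %/ n -> y1 %% n = y2 %% n -> y1 = y2.
Proof. by move=> e1 e2; apply: val_inj; rewrite /= (divn_eq y1 n) (divn_eq y2 n) e1 e2. Qed.

Theorem lemma2p1 (n : nat) (hn : 0 < n) :
  (exists C : cube n, SBC C) ->
  forall m : nat, 0 < m -> exists C' : cube (m * n), SBC C'.
Proof.
move=> [C hC] m hm.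
pose mo (x : nat) : 'I_n := Ordinal (ltn_pmod x hn).
have moE (x : nat) : mo (x %% n) = mo x by apply: val_inj; rewrite /= modn_mod.
have moI (i : 'I_n) : mo i = i by apply: val_inj; rewrite /= modn_small.
have hdiv (y : 'I_(m * n)) : y %/ n < m by rewrite ltn_divLR // ltn_ord.
pose D : cube (m * n) := fun x y z =>
  if (x %/ n + y %/ n + z %/ n) %% m == 0 then
    m ^ 2 * C (mo x) (mo y) (mo z) +
    (if (x %% n + y %% n + z %% n) %% n == 0 then m * (y %/ n) + z %/ n else 0)
  else 0.
exists D.
have cardT : #|{: 'I_n * 'I_n}| * m ^ 2 <= #|{: 'I_(m * n) * 'I_(m * n)}| by rewrite !card_prod !card_ord; nia.
have tau_lt b c : b < m -> c < m -> m * b + c < m ^ 2 by move=> ? ?; nia.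
pose LCx (q : 'I_n * 'I_n) := \sum_(i < n) C i q.1 q.2.
pose LCy (q : 'I_n * 'I_n) := \sum_(j < n) C q.1 j q.2.
pose LCz (q : 'I_n * 'I_n) := \sum_(k < n) C q.1 q.2 k.
pose pi (p : 'I_(m * n) * 'I_(m * n)) : 'I_n * 'I_n := (mo p.1, mo p.2).
pose taux (p : 'I_(m * n) * 'I_(m * n)) := m * (p.1 %/ n) + p.2 %/ n.
pose tauy (p : 'I_(m * n) * 'I_(m * n)) := m * ustar m (p.1 %/ n + p.2 %/ n) + p.2 %/ n.
pose tauz (p : 'I_(m * n) * 'I_(m * n)) := m * (p.2 %/ n) + ustar m (p.1 %/ n + p.2 %/ n).
have ex : [seq \sum_(i < m * n) D i jk.1 jk.2 | jk : 'I_(m * n) * 'I_(m * n)] =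
          [seq m ^ 2 * LCx (pi p) + taux p | p : 'I_(m * n) * 'I_(m * n)].
  apply: eq_map => -[y z] /=.
  pose F := (fun a i => if (a + y %/ n + z %/ n) %% m == 0 then m ^ 2 * C (mo i) (mo y) (mo z) +
      (if (i + y %% n + z %% n) %% n == 0 then m * (y %/ n) + z %/ n else 0) else 0).
  rewrite (eq_bigr (fun i : 'I_(m * n) => F (i %/ n) (i %% n))); last by move=> i _; rewrite /F /D /= moE.
  rewrite sum_divmod // /F.
  rewrite (@line_sum m n (fun a => (a + y %/ n + z %/ n) %% m == 0)
    (fun i => (i + y %% n + z %% n) %% n == 0) (ustar m (y %/ n + z %/ n))
    (ustar n (y %% n + z %% n)) (fun i => C (mo i) (mo y) (mo z))
    (fun _ => m * (y %/ n) + z %/ n) (m ^ 2)).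
  - by congr (_ * _ + _); apply: eq_bigr => i _; rewrite moI.
  - exact: ustar_lt.
  - exact: ustar_lt.
  - by move=> a ha; rewrite -addnA; apply: ustarP.
  - by move=> i hi; rewrite -addnA; apply: ustarP.
have ey : [seq \sum_(j < m * n) D ik.1 j ik.2 | ik : 'I_(m * n) * 'I_(m * n)] =
          [seq m ^ 2 * LCy (pi p) + tauy p | p : 'I_(m * n) * 'I_(m * n)].
  apply: eq_map => -[x z] /=.
  pose F := (fun b j => if (x %/ n + b + z %/ n) %% m == 0 then m ^ 2 * C (mo x) (mo j) (mo z) +
      (if (x %% n + j + z %% n) %% n == 0 then m * b + z %/ n else 0) else 0).
  rewrite (eq_bigr (fun i : 'I_(m * n) => F (i %/ n) (i %% n))); last by move=> i _; rewrite /F /D /= moE.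
  rewrite sum_divmod // /F.
  rewrite (@line_sum m n (fun b => (x %/ n + b + z %/ n) %% m == 0)
    (fun j => (x %% n + j + z %% n) %% n == 0) (ustar m (x %/ n + z %/ n))
    (ustar n (x %% n + z %% n)) (fun j => C (mo x) (mo j) (mo z))
    (fun b => m * b + z %/ n) (m ^ 2)).
  - by congr (_ * _ + _); apply: eq_bigr => i _; rewrite moI.
  - exact: ustar_lt.
  - exact: ustar_lt.
  - by move=> a ha; rewrite (_ : x %/ n + a + z %/ n = a + (x %/ n + z %/ n)) ?ustarP //; lia.
  - by move=> a ha; rewrite (_ : x %% n + a + z %% n = a + (x %% n + z %% n)) ?ustarP //; lia.
have ez : [seq \sum_(k < m * n) D ij.1 ij.2 k | ij : 'I_(m * n) * 'I_(m * n)] =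
          [seq m ^ 2 * LCz (pi p) + tauz p | p : 'I_(m * n) * 'I_(m * n)].
  apply: eq_map => -[x y] /=.
  pose F := (fun c k => if (x %/ n + y %/ n + c) %% m == 0 then m ^ 2 * C (mo x) (mo y) (mo k) +
      (if (x %% n + y %% n + k) %% n == 0 then m * (y %/ n) + c else 0) else 0).
  rewrite (eq_bigr (fun i : 'I_(m * n) => F (i %/ n) (i %% n))); last by move=> i _; rewrite /F /D /= moE.
  rewrite sum_divmod // /F.
  rewrite (@line_sum m n (fun c => (x %/ n + y %/ n + c) %% m == 0)
    (fun k => (x %% n + y %% n + k) %% n == 0) (ustar m (x %/ n + y %/ n))
    (ustar n (x %% n + y %% n)) (fun k => C (mo x) (mo y) (mo k))
    (fun c => m * (y %/ n) + c) (m ^ 2)).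
  - by congr (_ * _ + _); apply: eq_bigr => i _; rewrite moI.
  - exact: ustar_lt.
  - exact: ustar_lt.
  - by move=> a ha; rewrite addnC ustarP.
  - by move=> a ha; rewrite addnC ustarP.
have px := permL LCx (tau := taux) (pi := pi) (fun p => tau_lt _ _ (hdiv _) (hdiv _)) _ cardT.
have py := permL LCy (tau := tauy) (pi := pi)
   (fun p => tau_lt _ _ (ustar_lt _ hm) (hdiv _)) _ cardT.
have pz := permL LCz (tau := tauz) (pi := pi)
   (fun p => tau_lt _ _ (hdiv _) (ustar_lt _ hm)) _ cardT.
rewrite /SBC /line_sums ex ey ez.
apply: perm_trans (perm_cat (px _) (perm_cat (py _) (pz _))) _.
- move=> [y1 z1] [y2 z2] /= [e1 e2 e3].
  rewrite /taux /= in e3.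
  have [b c] := pair_eq (hdiv z1) (hdiv z2) e3.
  by congr pair; apply: (@ord_eq _ n).
- move=> [x1 z1] [x2 z2] /= [e1 e2 e3].
  rewrite /tauy /= in e3.
  have [b c] := pair_eq (hdiv z1) (hdiv z2) e3.
  have xd (x z : 'I_(m * n)) : x %/ n = ustar m (ustar m (x %/ n + z %/ n) + z %/ n).
    apply/eqP; rewrite -ustarP //.
    rewrite (_ : x %/ n + (ustar m (x %/ n + z %/ n) + z %/ n) = ustar m (x %/ n + z %/ n) + (x %/ n + z %/ n)); last lia.
    by rewrite ustarP ?ustar_lt.
  congr pair; apply: (@ord_eq _ n) => //.
  by rewrite (xd x1 z1) (xd x2 z2) b c.
- move=> [x1 y1] [x2 y2] /= [e1 e2 e3].
  rewrite /tauz /= in e3.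
  have [b c] := pair_eq (ustar_lt _ hm) (ustar_lt _ hm) e3.
  have xd (x y : 'I_(m * n)) : x %/ n = ustar m (ustar m (x %/ n + y %/ n) + y %/ n).
    apply/eqP; rewrite -ustarP //.
    rewrite (_ : x %/ n + (ustar m (x %/ n + y %/ n) + y %/ n) = ustar m (x %/ n + y %/ n) + (x %/ n + y %/ n)); last lia.
    by rewrite ustarP ?ustar_lt.
  congr pair; apply: (@ord_eq _ n) => //.
  by rewrite (xd x1 y1) (xd x2 y2) c b.
rewrite -!allpairs_cat.
apply: perm_trans (perm_allpairs _ hC (perm_refl _)) _.
rewrite iota_pairs (_ : 3 * n ^ 2 * m ^ 2 = 3 * (m * n) ^ 2) //; nia.
Qed.
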